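(* Let $u\in W^v$ and $\mu\in Y$. For every $\nu\in R_u(\mu)$ there exist real numbers $\lambda_{u'}\in[0,1]$, $u'\in[1,u]$, with $\sum_{u'\le u}\lambda_{u'}=1$ and $\nu=\sum_{u'\le u}\lambda_{u'}\,u'(\mu)$.
   Context: $I$ finite, $A$ a generalized Cartan matrix, $Y$ a free $\mathbb Z$-module of finite rank with free family $(\alpha_i^\vee)_{i\in I}$ and $\alpha_i\in\mathrm{Hom}(Y,\mathbb Z)$ with $\alpha_j(\alpha_i^\vee)=a_{i,j}$; $\mathbb A=Y\otimes\mathbb R$; $r_i(v)=v-\alpha_i(v)\alpha_i^\vee$; $W^v=\langle r_i\rangle$ with Bruhat order $\le$, $[1,u]=\{w:w\le u\}$; $Q^\vee=\bigoplus\mathbb Z\alpha_i^\vee$. For $E\subset Y$, $R_i(E)=\mathrm{conv}(E\cup r_i(E))\cap(E+Q^\vee)$; for $w\in W^v$, $\lambda\in Y$, $R_w(\lambda)=\bigcup R_{i_1}(R_{i_2}(\cdots R_{i_k}(\{\lambda\})\cdots))$ over all reduced expressions $w=r_{i_1}\cdots r_{i_k}$. *)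

(* Defs.v *)
From HB Require Import structures.
From mathcomp Require Import all_boot all_order all_algebra.
Set Implicit Arguments. Unset Strict Implicit. Unset Printing Implicit Defensive.
Import Order.TTheory GRing.Theory Num.Theory.
Local Open Scope ring_scope.

(* Y = Z^n as row vectors 'rV[int]_n ; I = 'I_k.
   alphav i : 'rV[int]_n   are the coroots alpha_i^vee in Y,
   alpha  j : 'cV[int]_n   represent alpha_j in Hom(Y,Z), via  alpha_j(v) = (v *m alpha j) 0 0. *)

Definition is_GCM (k : nat) (A : 'M[int]_k) : Prop :=
  (forall i, A i i = 2) /\
  (forall i j, i != j -> A i j <= 0) /\
  (forall i j, A i j = 0 <-> A j i = 0).

Section Weyl.
Variables (n k : nat) (alpha : 'I_k -> 'cV[int]_n) (alphav : 'I_k -> 'rV[int]_n).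

Definition evalroot (j : 'I_k) (v : 'rV[int]_n) : int := (v *m alpha j) 0 0.

Definition free_coroots : Prop :=
  forall c : 'I_k -> int, \sum_i c i *: alphav i = 0 -> forall i, c i = 0.

Definition refl (i : 'I_k) (v : 'rV[int]_n) : 'rV[int]_n := v - evalroot i v *: alphav i.
Definition rmx (i : 'I_k) : 'M[int]_n := 1%:M - alpha i *m alphav i.

(* the element r_{i1} ... r_{im} of W^v for the word [:: i1; ...; im],
   as a matrix acting on the right: (v *m mat_word s) = r_{i1}(...(r_{im} v)) *)
Definition mat_word (s : seq 'I_k) : 'M[int]_n := foldr (fun i M => M *m rmx i) 1%:M s.

Definition in_Weyl (w : 'M[int]_n) : Prop := exists s, w = mat_word s.

Definition reduced (s : seq 'I_k) : Prop :=
  forall t, mat_word t = mat_word s -> (size s <= size t)%N.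

Definition bruhat_le (w' w : 'M[int]_n) : Prop :=
  exists s t, [/\ reduced s, mat_word s = w, subseq t s & mat_word t = w'].

Definition in_Qvee (y : 'rV[int]_n) : Prop :=
  exists c : 'I_k -> int, y = \sum_i c i *: alphav i.

Variable R : realFieldType.

Definition embed (y : 'rV[int]_n) : 'rV[R]_n := map_mx (fun z : int => z%:~R) y.

Definition in_conv (P : 'rV[int]_n -> Prop) (y : 'rV[int]_n) : Prop :=
  exists (m : nat) (pts : 'I_m -> 'rV[int]_n) (lam : 'I_m -> R),
    [/\ forall j, P (pts j), forall j, 0 <= lam j, \sum_j lam j = 1 &
        embed y = \sum_j lam j *: embed (pts j)].

Definition Ri (i : 'I_k) (E : 'rV[int]_n -> Prop) : 'rV[int]_n -> Prop :=
  fun y => in_conv (fun x => E x \/ exists z, E z /\ x = refl i z) y /\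
           exists q, E q /\ in_Qvee (y - q).

Definition Rword (s : seq 'I_k) (lam : 'rV[int]_n) : 'rV[int]_n -> Prop :=
  foldr (fun i E => Ri i E) (fun y => y = lam) s.

Definition Rw (w : 'M[int]_n) (lam : 'rV[int]_n) : 'rV[int]_n -> Prop :=
  fun y => exists s, [/\ reduced s, mat_word s = w & Rword s lam y].

End Weyl.

(* Main.v *)
Require Import Defs.
From HB Require Import structures.
From mathcomp Require Import all_boot all_order all_algebra.
From Stdlib Require Import Classical.
Import Order.TTheory GRing.Theory Num.Theory.
Local Open Scope ring_scope.

Section Helpers.
Variables (R : realFieldType) (n k : nat) (alpha : 'I_k -> 'cV[int]_n)
  (alphav : 'I_k -> 'rV[int]_n) (mu : 'rV[int]_n).

Definition CW (s : seq 'I_k) (c : R) (x : 'rV[R]_n) : Prop :=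
  exists l : seq (R * seq 'I_k),
    [/\ (forall p, p \in l -> 0 <= p.1 /\ subseq p.2 s),
        \sum_(p <- l) p.1 = c &
        x = \sum_(p <- l) p.1 *: embed R (mu *m mat_word alpha alphav p.2)].

Lemma cw0 s : CW s 0 0.
Proof. by exists [::]; split => //; rewrite big_nil. Qed.

Lemma cwD s c d x y : CW s c x -> CW s d y -> CW s (c + d) (x + y).
Proof.
move=> [l1 [H1 S1 E1]] [l2 [H2 S2 E2]]; exists (l1 ++ l2); split.
- by move=> p; rewrite mem_cat => /orP [/H1|/H2].
- by rewrite big_cat S1 S2.
- by rewrite big_cat E1 E2.
Qed.

Lemma cwZ s a c x : 0 <= a -> CW s c x -> CW s (a * c) (a *: x).
Proof.
move=> a0 [l [H S E]]; exists [seq (a * p.1, p.2) | p <- l]; split.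
- move=> p /mapP [q /H [q0 qs] ->] /=; split => //; exact: mulr_ge0.
- by rewrite big_map -S mulr_sumr.
- by rewrite big_map E scaler_sumr; apply: eq_bigr => p _; rewrite scalerA.
Qed.

Lemma cw_sum s m (lam : 'I_m -> R) (X : 'I_m -> 'rV[R]_n) :
  (forall j, CW s 1 (X j)) -> (forall j, 0 <= lam j) ->
  CW s (\sum_j lam j) (\sum_j lam j *: X j).
Proof.
move=> HX Hl; apply: (big_rec2 (fun c x => CW s c x)); first exact: cw0.
move=> j c x _ Hc; apply: cwD => //.
by have := @cwZ s _ _ _ (Hl j) (HX j); rewrite mulr1.
Qed.

Lemma cw_sub s s' c x : subseq s s' -> CW s c x -> CW s' c x.
Proof.
move=> ss [l [H S E]]; exists l; split => // p /H [p0 ps]; split => //.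
exact: subseq_trans ps ss.
Qed.

Lemma embedM (y : 'rV[int]_n) (M : 'M[int]_n) :
  embed R (y *m M) = embed R y *m map_mx (fun z : int => (z%:~R : R)) M.
Proof. by rewrite /embed map_mxM. Qed.

Lemma refl_mx i z : refl alpha alphav i z = z *m rmx alpha alphav i.
Proof.
rewrite /refl /rmx mulmxBr mulmx1 mulmxA /evalroot.
by rewrite {2}[z *m alpha i]mx11_scalar mul_scalar_mx.
Qed.

Lemma cw_refl s i c x : CW s c x ->
  CW (i :: s) c (x *m map_mx (fun z : int => (z%:~R : R)) (rmx alpha alphav i)).
Proof.
move=> [l [H S E]]; exists [seq (p.1, i :: p.2) | p <- l]; split.
- move=> p /mapP [q /H [q0 qs] ->] /=; split => //; by rewrite eqxx.
- by rewrite big_map.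
- rewrite big_map E mulmx_suml; apply: eq_bigr => p _.
  by rewrite -scalemxAl -embedM /= mulmxA.
Qed.

Lemma Rword_cw s y : Rword alpha alphav R s mu y -> CW s 1 (embed R y).
Proof.
elim: s y => [|i s IH] y /=.
  move=> ->; exists [:: (1, [::])]; split.
  - by move=> p; rewrite inE => /eqP -> /=.
  - by rewrite big_seq1.
  - by rewrite big_seq1 /= mulmx1 scale1r.
move=> [[m [pts [lam [Hp Hl Hs Hy]]]] _].
rewrite Hy -Hs; apply: cw_sum => // j.
case: (Hp j) => [/IH|[z [/IH Hz ->]]].
  by apply: cw_sub; apply: subseq_cons.
by rewrite refl_mx embedM; apply: cw_refl.
Qed.

End Helpers.

Fixpoint words (k N : nat) : seq (seq 'I_k) :=
  if N is N'.+1 then [::] :: [seq i :: t | i <- enum 'I_k, t <- words k N']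
  else [:: [::]].

Lemma words_mem k N (t : seq 'I_k) : (size t <= N)%N -> t \in words k N.
Proof.
elim: N t => [|N IH] [|i t] //= Ht.
rewrite inE; apply/orP; right.
by apply: (allpairs_f (fun i t => i :: t)); [rewrite mem_enum | apply: IH].
Qed.

Lemma exists_filter (T : eqType) (P : T -> Prop) (c : seq T) :
  exists ws, uniq ws /\ forall w, w \in ws <-> (w \in c /\ P w).
Proof.
elim: c => [|x c [ws [U H]]].
  by exists [::]; split => // w; split => // [[]].
case: (classic (P x)) => Px; last first.
  exists ws; split => // w; rewrite H inE; split.
    by move=> [wc Pw]; rewrite wc orbT.
  by move=> [/orP [/eqP ->|wc] Pw].
case xw: (x \in ws).
  exists ws; split => // w; rewrite H inE; split.
    by move=> [wc Pw]; rewrite wc orbT.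
  move=> [/orP [/eqP ->|wc] Pw] //; exact/H.
exists (x :: ws); split; first by rewrite /= xw.
move=> w; rewrite !inE; split.
  move=> /orP [/eqP ->|/H [wc Pw]]; first by rewrite eqxx.
  by rewrite wc orbT.
move=> [/orP [/eqP ->|wc] Pw]; first by rewrite eqxx.
by apply/orP; right; apply/H.
Qed.

Theorem mainTheorem7 (R : realFieldType) (n k : nat) (A : 'M[int]_k)
    (alpha : 'I_k -> 'cV[int]_n) (alphav : 'I_k -> 'rV[int]_n) :
  is_GCM A ->
  free_coroots alphav ->
  (forall i j, evalroot alpha j (alphav i) = A i j) ->
  forall (u : 'M[int]_n) (mu nu : 'rV[int]_n),
    in_Weyl alpha alphav u ->
    Rw alpha alphav R u mu nu ->
    exists (ws : seq 'M[int]_n) (lam : 'M[int]_n -> R),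
      [/\ uniq ws,
          (forall w, w \in ws <-> bruhat_le alpha alphav w u),
          (forall w, w \in ws -> 0 <= lam w <= 1),
          \sum_(w <- ws) lam w = 1 &
          embed R nu = \sum_(w <- ws) lam w *: embed R (mu *m w)].
Proof.
move=> _ _ _ u mu nu _ [s [rs su Hw]].
have [l [Hl S E]] := @Rword_cw R n k alpha alphav mu s nu Hw.
have [ws [U Hws]] := @exists_filter _ (fun w => bruhat_le alpha alphav w u)
   [seq mat_word alpha alphav t | t <- words k (size s)].
have Hb : forall w, w \in ws <-> bruhat_le alpha alphav w u.
  move=> w; rewrite Hws; split; first by case.
  move=> Hb; split => //.
  case: Hb => [s' [t [rs' s'u ts' tw]]].
  have e1 := rs s'; have e2 := rs' s.
  rewrite -tw; apply: map_f; apply: words_mem.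
  apply: leq_trans (size_subseq ts') _.
  by apply: e2; rewrite su s'u.
have inws : forall p, p \in l -> mat_word alpha alphav p.2 \in ws.
  move=> p /Hl [_ ps]; apply/Hb.
  by exists s, p.2; split.
have inner : forall (V : zmodType) (t : 'M[int]_n) (a : V), t \in ws ->
    \sum_(w <- ws) (if t == w then a else 0) = a.
  move=> V t a tw; rewrite (bigD1_seq t) //= eqxx big1 ?addr0 //.
  by move=> w; rewrite eq_sym => /negbTE ->.
exists ws, (fun w => \sum_(p <- l | mat_word alpha alphav p.2 == w) p.1).
split => //.
- move=> w _; apply/andP; split.
    by rewrite big_seq_cond; apply: sumr_ge0 => p /andP [/Hl [p0 _] _].
  rewrite -S [X in _ <= X](bigID (fun p => mat_word alpha alphav p.2 == w)) /=.
  by rewrite lerDl big_seq_cond; apply: sumr_ge0 => p /andP [/Hl [p0 _] _].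
- under eq_bigr do rewrite big_mkcond.
  rewrite exchange_big /= -S big_seq [RHS]big_seq; apply: eq_bigr => p pl.
  exact: inner (inws _ pl).
- rewrite E; apply/esym; under eq_bigr do rewrite scaler_suml big_mkcond.
  rewrite exchange_big /= big_seq [RHS]big_seq; apply: eq_bigr => p pl.
  rewrite -(inner _ _ (p.1 *: embed R (mu *m mat_word alpha alphav p.2)) (inws _ pl)).
  by apply: eq_bigr => w _; case: eqP => // <-.
Qed.
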